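(* (a) Let $E=\bigcup_n E_n$ and $F=\bigcup_n F_n$ be locally convex direct limits of ascending sequences of Banach spaces $(E_n)$ and $(F_n)$ (with injective continuous linear bonding maps), and assume both sequences are compactly regular. Then $E\times F$ (with the product topology) is the locally convex direct limit $\bigcup_n(E_n\times F_n)$, and the sequence $(E_n\times F_n)_n$ is compactly regular. (b) Let $(E_n)_n$ and $(F_n)_n$ be ascending sequences of locally convex spaces with injective continuous linear bonding maps, with locally convex direct limits $E=\bigcup_n E_n$ and $F=\bigcup_n F_n$, and let $\tau_n\colon E_n\to F_n$ be topological embeddings (continuous linear) compatible with the bonding maps, inducing $\tau\colon E\to F$. Assume that for all $m,n\in\mathbb{N}$, every $x\in E_m$ with $\tau(x)\in F_n$ lies in $E_n$, and that $(F_n)_n$ is compactly regular. Then $(E_n)_n$ is compactly regular.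
   Context: An ascending sequence $(E_n)$ of locally convex spaces with injective continuous linear bonding maps and direct limit $E=\bigcup_n E_n$ is compactly regular if for every compact subset $C$ of $E$ there is $n\in\mathbb{N}$ such that $C\subseteq E_n$ and $C$ is compact in $E_n$. *)

(* Defs.v *)
From HB Require Import structures.
From mathcomp Require Import all_boot all_order all_algebra.
From mathcomp Require Import all_classical all_reals all_analysis.

Set Implicit Arguments.
Unset Strict Implicit.
Unset Printing Implicit Defensive.

Import Order.TTheory GRing.Theory Num.Theory.
Local Open Scope classical_set_scope.
Local Open Scope ring_scope.

(* Locally convex spaces are
   MathComp-Analysis [tvsType R] (topological vector spaces with a basis of
   convex sets); Banach spaces are [completeNormedModType R]. *)

Definition absolutely_convex (R : realType) (L : lmodType R) (U : set L) : Prop :=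
  forall (x y : L) (s t : R), U x -> U y -> `|s| + `|t| <= 1 -> U (s *: x + t *: y).

Definition ascending_seq (R : realType) (E : nat -> tvsType R)
    (b : forall n, E n -> E n.+1) : Prop :=
  forall n, linear (b n) /\ continuous (b n) /\ injective (b n).

(* L, together with the maps j n : E_n -> L, is the locally convex direct limit
   E = \bigcup_n E_n of the sequence (E_n, b):
   - algebraically: the j n are injective linear maps compatible with the
     bonding maps, whose images exhaust L (so L is the union of the E_n);
   - topologically: L carries the finest locally convex vector topology making
     all j n continuous, i.e. an absolutely convex U is a 0-neighbourhood in L
     iff each j n^-1(U) is a 0-neighbourhood in E_n. *)
Definition lc_direct_limit (R : realType) (E : nat -> tvsType R)
    (b : forall n, E n -> E n.+1) (L : tvsType R) (j : forall n, E n -> L) : Prop :=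
  [/\ forall n, linear (j n) /\ injective (j n),
      forall n (x : E n), j n.+1 (b n x) = j n x,
      forall x : L, exists n (y : E n), j n y = x &
      forall U : set L, absolutely_convex U ->
        (nbhs (0 : L) U <-> forall n, nbhs (0 : E n) (j n @^-1` U))].

Definition compactly_regular (R : realType) (E : nat -> tvsType R)
    (L : tvsType R) (j : forall n, E n -> L) : Prop :=
  forall C : set L, compact C ->
    exists n, C `<=` range (j n) /\ compact (j n @^-1` C).

Definition topological_embedding (U V : topologicalType) (f : U -> V) : Prop :=
  [/\ injective f, continuous f &
      forall (x : U) (A : set U), nbhs x A ->
        exists2 B : set V, nbhs (f x) B & f @^-1` B `<=` A].

Definition prod_bond (R : realType) (E F : nat -> tvsType R)
    (b : forall n, E n -> E n.+1) (c : forall n, F n -> F n.+1) :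
    forall n, (E n * F n)%type -> (E n.+1 * F n.+1)%type :=
  fun n z => (b n z.1, c n z.2).

Definition prod_inj (R : realType) (E F : nat -> tvsType R) (LE LF : tvsType R)
    (jE : forall n, E n -> LE) (jF : forall n, F n -> LF) :
    forall n, (E n * F n)%type -> (LE * LF)%type :=
  fun n z => (jE n z.1, jF n z.2).

(* Main.v *)
Require Import Defs.
From HB Require Import structures.
From mathcomp Require Import all_boot all_order all_algebra.
From mathcomp Require Import all_classical all_reals all_analysis.
Local Open Scope classical_set_scope.
Local Open Scope ring_scope.

Import Order.TTheory GRing.Theory Num.Theory.

Set Implicit Arguments.
Unset Strict Implicit.
Unset Printing Implicit Defensive.

Section Aux.
Variable R : realType.

Lemma conv2 (E : lmodType R) (b : set E) (x y : E) (a : R) :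
  @convex_set R E b -> b x -> b y -> 0 <= a -> a <= 1 -> b (a *: x + (1 - a) *: y).
Proof.
move=> cb bx bY a0 a1.
have := cb x y (Itv01 a0 a1) (mem_set bx) (mem_set bY).
by move/set_mem.
Qed.

Lemma conv3 (E : lmodType R) (b : set E) (x y : E) (a c : R) :
  @convex_set R E b -> b 0 -> b x -> b y -> 0 <= a -> 0 <= c -> a + c <= 1 ->
  b (a *: x + c *: y).
Proof.
move=> cb b0 bx bY a0 c0 ac1.
have [g0|gn0] := eqVneq (a + c) 0.
  move/eqP: g0; rewrite paddr_eq0 // => /andP[/eqP -> /eqP ->].
  by rewrite !scale0r addr0.
have gp : 0 < a + c by rewrite lt_neqAle eq_sym gn0 addr_ge0.
have h1 : b ((a / (a + c)) *: x + (1 - a / (a + c)) *: y).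
  apply: conv2 => //; first by rewrite divr_ge0 // ltW.
  by rewrite ler_pdivrMr // mul1r lerDl.
have := conv2 cb h1 b0 (ltW gp) ac1.
rewrite scaler0 addr0 scalerDr !scalerA mulrC divfK //.
have -> : (a + c) * (1 - a / (a + c)) = c.
  by rewrite mulrBr mulr1 mulrC divfK // addrC addKr.
by [].
Qed.

End Aux.

Unset Implicit Arguments.
Set Implicit Arguments.
Unset Strict Implicit.
Unset Printing Implicit Defensive.

Section Aux2.
Variable R : realType.

Lemma sign_split (E : lmodType R) (U : set E) (s : R) (x : E) :
  (forall z, U z -> U (- z)) -> U x -> exists2 x', U x' & s *: x = `|s| *: x'.
Proof.
move=> Us Ux; have [s0|s0] := leP 0 s.
  by exists x => //; rewrite ger0_norm.
by exists (- x); [exact: Us|rewrite ltr0_norm // scalerN scaleNr opprK].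
Qed.

Lemma abs_conv_nbhs (E : tvsType R) (V : set E) :
  nbhs (0 : E) V -> exists U : set E, [/\ absolutely_convex U, nbhs (0 : E) U & U `<=` V].
Proof.
move=> nV.
have [B Bc [Bo Bb]] := @locally_convex R E.
have [b [Bb' b0] bV] := Bb 0 V nV.
have nb : nbhs (0 : E) b by apply: open_nbhs_nbhs; split => //; exact: Bo.
have cb : @convex_set R E b by apply: Bc; exact: mem_set.
pose U := [set x : E | b x /\ b (- x)].
have Us : forall z, U z -> U (- z) by move=> z [h1 h2]; split; rewrite ?opprK.
exists U; split.
- move=> x y s t Ux Uy st.
  have [x' Ux' ->] := sign_split s Us Ux.
  have [y' Uy' ->] := sign_split t Us Uy.
  have [Ux1 Ux2] := Ux'; have [Uy1 Uy2] := Uy'.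
  split; first exact: conv3.
  by rewrite opprD -!scalerN; apply: conv3.
- apply: filterI => //.
  have := @opp_continuous E 0 b; rewrite oppr0 => /(_ nb).
  by [].
- by move=> x [/bV].
Qed.

End Aux2.

Unset Implicit Arguments.
Set Implicit Arguments.
Unset Strict Implicit.
Unset Printing Implicit Defensive.

Section Lin.
Variable R : realType.
Variables (E L : lmodType R) (f : E -> L).
Hypothesis lf : linear f.

Lemma linD x y : f (x + y) = f x + f y.
Proof. by have := lf 1 x y; rewrite !scale1r. Qed.
Lemma lin0 : f 0 = 0.
Proof. by apply: (addrI (f 0)); rewrite addr0 -linD addr0. Qed.
Lemma linZ a x : f (a *: x) = a *: f x.
Proof. by have := lf a x 0; rewrite !addr0 lin0 addr0. Qed.
Lemma linN x : f (- x) = - f x.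
Proof. by rewrite -scaleN1r linZ scaleN1r. Qed.
End Lin.

Section Cont.
Variable R : realType.

Lemma lin_cont (E L : tvsType R) (f : E -> L) : linear f ->
  (forall U : set L, absolutely_convex U -> nbhs (0 : L) U -> nbhs (0 : E) (f @^-1` U)) ->
  continuous f.
Proof.
move=> lf hU x V nV.
have nW : nbhs (0 : L) (+%R (- f x) @` V).
  by have := @nbhsB R L V (f x) (- f x) nV; rewrite addNr.
have [U [aU nU UW]] := abs_conv_nbhs nW.
have := @nbhsT R E _ x (hU U aU nU).
apply: filterS => _ [u Uu <-] /=.
have [v Vv] := UW _ Uu; rewrite (linD lf) => <-.
by rewrite addrA subrr add0r.
Qed.

End Cont.

Unset Implicit Arguments.
Set Implicit Arguments.
Unset Strict Implicit.
Unset Printing Implicit Defensive.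

Section Haus.
Variable R : realType.

Lemma tvs_hausdorff (L : tvsType R) :
  (forall z : L, (forall U, nbhs (0 : L) U -> U z) -> z = 0) -> hausdorff_space L.
Proof.
move=> hz p q cpq.
suff : q - p = 0 by move/eqP; rewrite subr_eq0 => /eqP.
apply: hz => U nU.
have := @sub_continuous L (0, 0) U; rewrite /= subr0 => /(_ nU).
case=> [[A B]] /= [nA nB] sAB.
have nW : nbhs (0 : L) (A `&` B) by exact: filterI.
have [r [[w1 W1 e1] [w2 W2 e2]]] :=
  cpq _ _ (@nbhsT R L _ p nW) (@nbhsT R L _ q nW).
have -> : q - p = w1 - w2.
  have eq : p + w1 = q + w2 by rewrite [LHS]e1 [RHS]e2.
  have -> : q = p + w1 - w2 by rewrite eq addrK.
  by rewrite -addrA addrC -addrA addKr addrC.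
by apply: (sAB (w1, w2)); split; [case: W1|case: W2].
Qed.

Lemma prod_hausdorff (T U : topologicalType) :
  hausdorff_space T -> hausdorff_space U -> hausdorff_space (T * U)%type.
Proof.
move=> hT hU [p1 p2] [q1 q2] cpq.
have e1 : p1 = q1.
  apply: hT => A B nA nB.
  have : (A `*` @setT U) `&` (B `*` @setT U) !=set0.
    apply: cpq; [exists (A, setT) | exists (B, setT)] => //=;
      (split => //; exact: filterT).
  by case=> [[r1 r2] [[Ar _] [Br _]]]; exists r1.
have e2 : p2 = q2.
  apply: hU => A B nA nB.
  have : (@setT T `*` A) `&` (@setT T `*` B) !=set0.
    apply: cpq; [exists (setT, A) | exists (setT, B)] => //=;
      (split => //; exact: filterT).
  by case=> [[r1 r2] [[_ Ar] [_ Br]]]; exists r2.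
by rewrite e1 e2.
Qed.

Lemma cr_hausdorff (E : nat -> normedModType R) (L : tvsType R)
  (j : forall n, E n -> L) :
  (forall n, linear (j n)) ->
  @compactly_regular R (fun n => E n : tvsType R) L j -> hausdorff_space L.
Proof.
move=> jl cr; apply: tvs_hausdorff => z hz.
pose C := range (fun k : nat => k%:R *: z).
have inB : forall B, nbhs (0 : L) B -> C `<=` B.
  move=> B nB _ [k _ <-].
  have [->|k0] := eqVneq k 0%N; first by rewrite scale0r; exact: nbhs_singleton.
  have kn0 : (k%:R : R) != 0 by rewrite pnatr_eq0.
  have := hz _ (nbhs0Z (invr_neq0 kn0) nB).
  by case=> b' Bb' <-; rewrite scalerA divff // scale1r.
have cC : compact C.
  move=> F PF FC; exists 0; split; first by exists 0%N => //; rewrite scale0r.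
  move=> A B FA nB.
  have [c [Cc Ac]] := filter_ex (filterI FC FA).
  by exists c; split => //; exact: inB.
have [n [Cr Dc]] := cr C cC.
have [w _ wz] := Cr z (ex_intro2 _ _ 1%N I (scale1r z)).
have Dbd := @compact_bounded R (E n) _ Dc.
have [M M0 hM] := pinfty_ex_gt0 Dbd.
have kD : forall k : nat, `|k%:R *: w| <= M.
  move=> k; apply: (hM (k%:R *: w)) => /=.
  by exists k => //; rewrite (linZ (jl n)) wz.
have [w0|wn0] := eqVneq w 0; first by rewrite -wz w0 (lin0 (jl n)).
have wp : 0 < `|w| by rewrite normr_gt0.
have := kD (Num.bound (M / `|w|)).
rewrite normrZ normr_nat -ler_pdivlMr //.
have := archi_boundP (ltW (divr_gt0 M0 wp)).
by move=> h1 h2; have := lt_le_trans h1 h2; rewrite ltxx.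
Qed.

End Haus.

Unset Implicit Arguments.

Section DL.
Variable R : realType.
Variable E : nat -> tvsType R.
Variable b : forall n, E n -> E n.+1.
Variable L : tvsType R.
Variable j : forall n, E n -> L.
Hypothesis hb : ascending_seq b.
Hypothesis hj : lc_direct_limit b j.

Lemma j_lin (n : nat) : linear (j n).
Proof. by case: hj => /(_ n) []. Qed.
Lemma j_inj (n : nat) : injective (j n).
Proof. by case: hj => /(_ n) []. Qed.
Lemma j_compat n (x : E n) : j n.+1 (b n x) = j n x.
Proof. by case: hj => _ h _ _; exact: h. Qed.
Lemma j_exh (x : L) : exists n (y : E n), j n y = x.
Proof. by case: hj => _ _ h _; exact: h. Qed.
Lemma j_top (U : set L) : absolutely_convex U ->
  (nbhs (0 : L) U <-> forall n, nbhs (0 : E n) (j n @^-1` U)).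
Proof. by case: hj => _ _ _ h; exact: h. Qed.

Lemma j_cont (n : nat) : continuous (j n).
Proof.
apply: lin_cont; first exact: j_lin.
by move=> U aU nU; move/(j_top U aU): nU; apply.
Qed.

Fixpoint bond (n d : nat) : E n -> E (d + n) :=
  match d return E n -> E (d + n) with
  | 0 => fun x => x
  | d'.+1 => fun x => b (d' + n) (bond n d' x)
  end.

Lemma bond_j n d (x : E n) : j (d + n) (bond n d x) = j n x.
Proof. by elim: d => [//|d IH] /=; rewrite j_compat. Qed.

Lemma bond_cont (n d : nat) : continuous (bond n d).
Proof.
elim: d => [|d IH] /=; first by move=> x.
have [_ [hc _]] := hb (d + n).
move=> x; exact: (continuous_comp (IH x) (hc (bond n d x))).
Qed.

Lemma dl_lift n k (x : E n) : (n <= k)%N -> exists y : E k, j k y = j n x.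
Proof.
move=> nk; have : exists y : E (k - n + n), j (k - n + n) y = j n x.
  by exists (bond n (k - n) x); exact: bond_j.
by rewrite subnK.
Qed.

Lemma common (x y : L) : exists k (u v : E k), j k u = x /\ j k v = y.
Proof.
have [n [u <-]] := j_exh x; have [m [v <-]] := j_exh y.
have [u' hu] := dl_lift _ _ u (leq_maxl n m).
have [v' hv] := dl_lift _ _ v (leq_maxr n m).
by exists (maxn n m), u', v'.
Qed.

Definition PC (C : set L) n := C `<=` range (j n) /\ compact (j n @^-1` C).

Lemma PC_bump (C : set L) n k : (n <= k)%N -> PC C n -> PC C k.
Proof.
move=> nk; rewrite -(subnK nk); move: (k - n)%N => d {nk}.
move=> [Cr Cc]; split.
  move=> c /Cr [y _ <-]; exists (bond n d y) => //; exact: bond_j.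
have -> : j (d + n) @^-1` C = bond n d @` (j n @^-1` C).
  apply/seteqP; split.
    move=> z /= Cz; have [y _ yz] := Cr _ Cz.
    exists y; first by rewrite /= yz.
    by apply: j_inj; rewrite bond_j.
  by move=> _ [y Cy <-]; rewrite /= bond_j.
apply: continuous_compact => //.
apply: continuous_subspaceT; exact: bond_cont.
Qed.

End DL.

Lemma emb_compact (U V : topologicalType) (f : U -> V) (D : set U) :
  topological_embedding f -> compact (f @` D) -> compact D.
Proof.
case=> _ _ he cD F PF FD.
have FfD : (f @ F) (f @` D) by apply: (@filterS _ _ _ D) => // x Dx; exists x.
have [_ [[x Dx <-] cl]] := cD _ (fmap_proper_filter f PF) FfD.
exists x; split => // A B FA nB.
have [B' nB' sB'] := he x B nB.
have FfA : (f @ F) (f @` A) by apply: (@filterS _ _ _ A) => // a Aa; exists a.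
have [_ [[a Aa <-] B'a]] := cl _ _ FfA nB'.
by exists a; split => //; exact: sB'.
Qed.

Lemma partb (R : realType) (E F : nat -> tvsType R)
      (b : forall n, E n -> E n.+1) (c : forall n, F n -> F n.+1)
      (LE LF : tvsType R)
      (jE : forall n, E n -> LE) (jF : forall n, F n -> LF)
      (tau_ : forall n, E n -> F n) (tau : LE -> LF) :
    @ascending_seq R E b -> @ascending_seq R F c ->
    @lc_direct_limit R E b LE jE -> @lc_direct_limit R F c LF jF ->
    (forall n, linear (tau_ n) /\ topological_embedding (tau_ n)) ->
    (forall n (x : E n), tau_ n.+1 (b n x) = c n (tau_ n x)) ->
    (forall n (x : E n), tau (jE n x) = jF n (tau_ n x)) ->
    (forall m n (x : E m), (exists y : F n, jF n y = tau (jE m x)) ->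
       exists z : E n, jE n z = jE m x) ->
    @compactly_regular R F LF jF ->
    @compactly_regular R E LE jE.
Proof.
move=> hb hc hjE hjF htau _ htj hlift crF C cC.
have tl : forall n, linear (tau_ n) by move=> n; case: (htau n).
have tlin : linear tau.
  move=> a x y.
  have [k [u [v [<- <-]]]] := common R E b LE jE hjE x y.
  by rewrite -(linZ (j_lin _ _ _ _ _ hjE k)) -(linD (j_lin _ _ _ _ _ hjE k))
    !htj (tl k) (linD (j_lin _ _ _ _ _ hjF k)) (linZ (j_lin _ _ _ _ _ hjF k)).
have tcont : continuous tau.
  apply: lin_cont => // U aU nU.
  have aU' : absolutely_convex (tau @^-1` U).
    by move=> x y s t Ux Uy st; rewrite /= tlin (linZ tlin); exact: aU.
  apply/(j_top R E b LE jE hjE _ aU') => n.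
  have nUn := (proj1 (j_top R F c LF jF hjF U aU) nU n).
  have [_ [_ tc _]] := htau n.
  have := tc 0 (jF n @^-1` U); rewrite (lin0 (tl n)) => /(_ nUn).
  move=> h; apply: (@filterS _ (nbhs (0 : E n)) _ (tau_ n @^-1` (jF n @^-1` U))); [by move=> x /=; rewrite htj | exact: h].
have [n [Kr Kc]] := crF _ (continuous_compact (continuous_subspaceT tcont) cC).
have Cr : C `<=` range (jE n).
  move=> x Cx; have [m [y yx]] := j_exh R E b LE jE hjE x.
  have [y' _ y'e] := Kr (tau x) (ex_intro2 _ _ x Cx erefl).
  have [z zx] := hlift m n y (ex_intro _ y' (etrans y'e (f_equal tau (esym yx)))).
  by exists z => //; rewrite zx.
exists n; split => //.
apply: (emb_compact _ _ (tau_ n) _ (proj2 (htau n))).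
have -> : tau_ n @` (jE n @^-1` C) = jF n @^-1` (tau @` C) => //.
apply/seteqP; split.
  by move=> _ [z Cz <-]; exists (jE n z) => //; rewrite htj.
move=> y [x Cx e].
have [z _ zx] := Cr x Cx.
exists z; first by rewrite /= zx.
apply: (j_inj R F c LF jF hjF n); rewrite -htj zx //.
Qed.

Lemma parta (R : realType) (E F : nat -> completeNormedModType R)
      (b : forall n, E n -> E n.+1) (c : forall n, F n -> F n.+1)
      (LE LF : tvsType R)
      (jE : forall n, E n -> LE) (jF : forall n, F n -> LF) :
    @ascending_seq R (fun n => E n : tvsType R) b ->
    @ascending_seq R (fun n => F n : tvsType R) c ->
    @lc_direct_limit R (fun n => E n : tvsType R) b LE jE ->
    @lc_direct_limit R (fun n => F n : tvsType R) c LF jF ->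
    @compactly_regular R (fun n => E n : tvsType R) LE jE ->
    @compactly_regular R (fun n => F n : tvsType R) LF jF ->
    @lc_direct_limit R (fun n => (E n * F n)%type : tvsType R)
      (@prod_bond R (fun n => E n : tvsType R) (fun n => F n : tvsType R) b c)
      (LE * LF)%type
      (@prod_inj R (fun n => E n : tvsType R) (fun n => F n : tvsType R) LE LF jE jF) /\
    @compactly_regular R (fun n => (E n * F n)%type : tvsType R)
      (LE * LF)%type
      (@prod_inj R (fun n => E n : tvsType R) (fun n => F n : tvsType R) LE LF jE jF).
Proof.
move=> hb hc hjE hjF crE crF.
set pi := @prod_inj R _ _ LE LF jE jF.
have lE := j_lin R _ b LE jE hjE.
have lF := j_lin R _ c LF jF hjF.
have pinb : forall n (U : set (LE * LF)%type), nbhs (0 : (LE * LF)%type) U ->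
    nbhs (0 : (E n * F n)%type) (pi n @^-1` U).
  move=> n U nU; hnf in nU; have [[A B] /= [nA nB] sAB] := nU.
  hnf; exists (jE n @^-1` A, jF n @^-1` B); last first.
    by case=> x y /= [Ax By]; apply: (sAB (jE n x, jF n y)).
  split.
  - by have := j_cont R _ b LE jE hjE n 0 A; rewrite (lin0 (lE n)) => /(_ nA).
  - by have := j_cont R _ c LF jF hjF n 0 B; rewrite (lin0 (lF n)) => /(_ nB).
have pil : forall n, linear (pi n).
  move=> n a [x1 y1] [x2 y2].
  have -> : a *: ((x1, y1) : (E n * F n)%type) + (x2, y2) = (a *: x1 + x2, a *: y1 + y2) by [].
  by rewrite /pi /prod_inj /= lE lF.
have picont : forall n, continuous (pi n).
  by move=> n; apply: lin_cont; [exact: pil | move=> U _ nU; exact: pinb].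
have dl : @lc_direct_limit R (fun n => (E n * F n)%type : tvsType R)
      (@prod_bond R (fun n => E n : tvsType R) (fun n => F n : tvsType R) b c)
      (LE * LF)%type pi.
  split.
  - move=> n; split; first exact: pil.
    move=> [x1 y1] [x2 y2]; rewrite /pi /prod_inj /= => -[].
    by move=> /(j_inj R _ b LE jE hjE) -> /(j_inj R _ c LF jF hjF) ->.
  - move=> n [x y].
    by rewrite /pi /prod_inj /prod_bond /= (j_compat R _ b LE jE hjE) (j_compat R _ c LF jF hjF).
  - move=> [x y].
    have [n [u <-]] := j_exh R _ b LE jE hjE x.
    have [m [v <-]] := j_exh R _ c LF jF hjF y.
    have [u' hu] := dl_lift R _ b LE jE hjE _ _ u (leq_maxl n m).
    have [v' hv] := dl_lift R _ c LF jF hjF _ _ v (leq_maxr n m).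
    by exists (maxn n m), (u', v'); rewrite /pi /prod_inj /= hu hv.
  - move=> U aU; split; first by move=> nU n; exact: pinb.
    move=> hn.
    pose UE := [set x : LE | U (x, 0)].
    pose UF := [set y : LF | U (0, y)].
    have aUE : absolutely_convex UE.
      move=> x y s t Ux Uy st; have := aU _ _ s t Ux Uy st.
      have -> : s *: ((x, 0) : (LE * LF)%type) + t *: (y, 0) = (s *: x + t *: y, s *: 0 + t *: 0) by [].
      by rewrite !scaler0 addr0.
    have aUF : absolutely_convex UF.
      move=> x y s t Ux Uy st; have := aU _ _ s t Ux Uy st.
      have -> : s *: ((0, x) : (LE * LF)%type) + t *: (0, y) = (s *: 0 + t *: 0, s *: x + t *: y) by [].
      by rewrite !scaler0 addr0.
    have nUE : nbhs (0 : LE) UE.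
      apply/(j_top R _ b LE jE hjE _ aUE) => n.
      have := hn n => hnn; hnf in hnn; have [[A B] /= [nA nB] sAB] := hnn.
      apply: (@filterS _ _ _ A) => // x Ax.
      have := sAB (x, 0) (conj Ax (nbhs_singleton nB)).
      by rewrite /pi /prod_inj /= (lin0 (lF n)).
    have nUF : nbhs (0 : LF) UF.
      apply/(j_top R _ c LF jF hjF _ aUF) => n.
      have := hn n => hnn; hnf in hnn; have [[A B] /= [nA nB] sAB] := hnn.
      apply: (@filterS _ _ _ B) => // y By.
      have := sAB (0, y) (conj (nbhs_singleton nA) By).
      by rewrite /pi /prod_inj /= (lin0 (lE n)).
    have h2 : (2^-1 : R) != 0 by rewrite invr_eq0 pnatr_eq0.
    hnf; exists ( *:%R (2^-1 : R) @` UE, *:%R (2^-1 : R) @` UF).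
      by split; exact: nbhs0Z.
    case=> _ _ /= [[x Ux <-] [y Uy <-]].
    have n2 : `|2^-1 : R| + `|2^-1 : R| <= 1.
      by rewrite ger0_norm ?invr_ge0 // [X in _ <= X](splitr 1) mul1r.
    have := aU _ _ _ _ Ux Uy n2.
    have -> : (2^-1 : R) *: ((x, 0) : (LE * LF)%type) + (2^-1 : R) *: (0, y) =
       (2^-1 *: x + 2^-1 *: 0, 2^-1 *: 0 + 2^-1 *: y) by [].
    by rewrite !scaler0 addr0 add0r.
split => //.
have hE : hausdorff_space LE by exact: (@cr_hausdorff R (fun n => E n) LE jE lE crE).
have hF : hausdorff_space LF by exact: (@cr_hausdorff R (fun n => F n) LF jF lF crF).
move=> C cC.
have fstc : continuous (@fst LE LF) by move=> x; exact: cvg_fst.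
have sndc : continuous (@snd LE LF) by move=> x; exact: cvg_snd.
have cC1 := continuous_compact (continuous_subspaceT fstc) cC.
have cC2 := continuous_compact (continuous_subspaceT sndc) cC.
have [n1 P1] := crE _ cC1.
have [n2 P2] := crF _ cC2.
have [Cr1 Cc1] := PC_bump R _ b LE jE hb hjE _ n1 (maxn n1 n2) (leq_maxl _ _) P1.
have [Cr2 Cc2] := PC_bump R _ c LF jF hc hjF _ n2 (maxn n1 n2) (leq_maxr _ _) P2.
exists (maxn n1 n2); split.
  move=> [x y] Cxy.
  have [u _ eu] := Cr1 x (ex_intro2 _ _ (x, y) Cxy erefl).
  have [v _ ev] := Cr2 y (ex_intro2 _ _ (x, y) Cxy erefl).
  by exists (u, v) => //; rewrite /pi /prod_inj /= eu ev.
apply: (subclosed_compact _ (compact_setX Cc1 Cc2)).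
  apply: preimage_closed; first by move=> z _; exact: picont.
  exact: compact_closed (prod_hausdorff hE hF) cC.
move=> [u v] /= Cuv; split.
  by exists (jE _ u, jF _ v).
by exists (jE _ u, jF _ v).
Qed.

Theorem lemma4p7 :
  (* (a) *)
  (forall (R : realType) (E F : nat -> completeNormedModType R)
      (b : forall n, E n -> E n.+1) (c : forall n, F n -> F n.+1)
      (LE LF : tvsType R)
      (jE : forall n, E n -> LE) (jF : forall n, F n -> LF),
    @ascending_seq R (fun n => E n : tvsType R) b ->
    @ascending_seq R (fun n => F n : tvsType R) c ->
    @lc_direct_limit R (fun n => E n : tvsType R) b LE jE ->
    @lc_direct_limit R (fun n => F n : tvsType R) c LF jF ->
    @compactly_regular R (fun n => E n : tvsType R) LE jE ->
    @compactly_regular R (fun n => F n : tvsType R) LF jF ->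
    @lc_direct_limit R (fun n => (E n * F n)%type : tvsType R)
      (@prod_bond R (fun n => E n : tvsType R) (fun n => F n : tvsType R) b c)
      (LE * LF)%type
      (@prod_inj R (fun n => E n : tvsType R) (fun n => F n : tvsType R) LE LF jE jF) /\
    @compactly_regular R (fun n => (E n * F n)%type : tvsType R)
      (LE * LF)%type
      (@prod_inj R (fun n => E n : tvsType R) (fun n => F n : tvsType R) LE LF jE jF)) /\
  (* (b) *)
  (forall (R : realType) (E F : nat -> tvsType R)
      (b : forall n, E n -> E n.+1) (c : forall n, F n -> F n.+1)
      (LE LF : tvsType R)
      (jE : forall n, E n -> LE) (jF : forall n, F n -> LF)
      (tau_ : forall n, E n -> F n) (tau : LE -> LF),
    @ascending_seq R E b -> @ascending_seq R F c ->
    @lc_direct_limit R E b LE jE -> @lc_direct_limit R F c LF jF ->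
    (forall n, linear (tau_ n) /\ topological_embedding (tau_ n)) ->
    (forall n (x : E n), tau_ n.+1 (b n x) = c n (tau_ n x)) ->
    (forall n (x : E n), tau (jE n x) = jF n (tau_ n x)) ->
    (forall m n (x : E m), (exists y : F n, jF n y = tau (jE m x)) ->
       exists z : E n, jE n z = jE m x) ->
    @compactly_regular R F LF jF ->
    @compactly_regular R E LE jE).
Proof.
split.
- exact: parta.
- exact: partb.
Qed.
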